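(* Let $g\ge 1$ be an integer and let $A=\{a_1<\cdots<a_m\}\subset\mathbb N$ be a $\mathcal D[g]$ set. Then $$a_m\ \ge\ \frac1g\binom{m}{\lfloor m/2\rfloor}-1,$$ and hence $\binom{m}{\lfloor m/2\rfloor}\le g(a_m+1)$.
   Context: For a positive integer $g$, a set $\mathcal S=\{a_1<a_2<\cdots\}\subset\mathbb N$ (finite or infinite) is a $\mathcal D[g]$ set if for every $m$ (for which $a_m$ exists) and every $t\in\mathbb Z$, $$\left|\left\{I\subseteq\{1,\dots,m\}:\ \sum_{i\in I}a_i=t\right\}\right|\le g.$$ *)

(* Defs.v *)
From mathcomp Require Import all_boot all_order all_algebra.
Set Implicit Arguments. Unset Strict Implicit. Unset Printing Implicit Defensive.

(* A finite set A = {a_1 < ... < a_m} of positive integers is represented by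
   a : 'I_m -> nat, strictly increasing, with a i >= 1.  Index i : 'I_m
   corresponds to a_{i+1}. *)

Definition subset_sum_count (m : nat) (a : 'I_m -> nat) (k t : nat) : nat :=
  #|[set I : {set 'I_m} | [forall i in I, (i < k)%N] & (\sum_(i in I) a i == t)]|.

(* D[g] property: for every prefix length k (1 <= k <= m) and every target t,
   at most g subsets of {a_1,...,a_k} have sum t.  (Targets t in Z: negative
   targets have no representations, so t ranging over nat is equivalent.) *)
Definition D_set (g m : nat) (a : 'I_m -> nat) : Prop :=
  forall (k : nat), (1 <= k <= m)%N -> forall t : nat, (subset_sum_count a k t <= g)%N.

(* Main.v *)
Require Import Defs.
From mathcomp Require Import all_boot all_order all_algebra.
From mathcomp Require Import zify.
Import Order.TTheory GRing.Theory Num.Theory.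
Set Implicit Arguments. Unset Strict Implicit. Unset Printing Implicit Defensive.

Definition sm m (a : 'I_m.+1 -> nat) (B : {set 'I_m.+1}) := \sum_(i in B) a i.
Definition Rc m (A B : {set 'I_m.+1}) := (A \subset B) && (#|B| == #|A|.+1).
Definition Sk m (a : 'I_m.+1 -> nat) k := \sum_(i : 'I_m.+1 | (i < k)%N) a i.

Lemma Rc_sum m (a : 'I_m.+1 -> nat) A B : Rc A B ->
  exists2 j, j \in B & sm a B = sm a A + a j.
Proof.
move=> /andP[sAB /eqP cB].
have : #|B :\: A| == 1.
  by rewrite cardsD (setIidPr sAB) cB subSnn.
move=> /cards1P[j E].
have Ei i : (i \in B :\: A) = (i == j) by rewrite E inE.
have jB : j \in B by have := Ei j; rewrite !inE eqxx => /andP[].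
exists j => //.
rewrite /sm (big_setD1 j jB) addnC; congr (_ + _); apply: eq_bigl => i.
have := Ei i; rewrite !inE.
case: (i =P j) => [->|ij] /=.
  by case: (j \in A).
case iA: (i \in A) => /=; last by case: (i \in B).
by rewrite (subsetP sAB).
Qed.

Lemma Rc_card_lt m (h : {set 'I_m.+1}) t B : path (@Rc m) h t -> B \in t -> #|h| < #|B|.
Proof.
elim: t h => [|y t IH] h //= /andP[/andP[_ /eqP cy] pt].
rewrite inE => /orP[/eqP->|Bt]; first by rewrite cy.
by apply: ltn_trans (IH _ pt Bt); rewrite cy.
Qed.

Lemma Rc_uniqcard m (h : {set 'I_m.+1}) t A A' : path (@Rc m) h t ->
  A \in h :: t -> A' \in h :: t -> #|A| = #|A'| -> A = A'.
Proof.
elim: t h => [|y t IH] h.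
  by move=> _; rewrite !inE => /eqP-> /eqP->.
move=> p; have p' := p; move: p' => /= /andP[_ pt].
rewrite inE => /orP[/eqP->|At]; rewrite inE => /orP[/eqP->|At'] //.
- by move=> E; have := Rc_card_lt p At'; rewrite E ltnn.
- by move=> E; have := Rc_card_lt p At; rewrite E ltnn.
- exact: IH pt At At'.
Qed.

Lemma Rc_mono m a (h : {set 'I_m.+1}) t : path (@Rc m) h t -> sm a h <= sm a (last h t).
Proof.
elim: t h => [|y t IH] h //= /andP[R pt].
have [j _ E] := Rc_sum a R.
by apply: leq_trans (IH _ pt); rewrite E leq_addr.
Qed.

Definition win m a M S (B : {set 'I_m.+1}) := (S <= 2 * sm a B + M) && (2 * sm a B <= S + M).

Lemma hit m a M S (h : {set 'I_m.+1}) t : (forall i, a i <= M) -> path (@Rc m) h t ->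
  2 * sm a h <= S + M -> S <= 2 * sm a (last h t) + M -> has (win a M S) (h :: t).
Proof.
move=> aM; elim: t h => [|y t IH] h /=.
  by move=> _ h1 h2; rewrite /win h1 h2.
move=> /andP[R pt] h1 h2.
case w: (S <= 2 * sm a h + M); first by rewrite /win w h1.
apply/orP; right; apply: IH => //.
have [j _ E] := Rc_sum a R.
have := aM j; rewrite E; lia.
Qed.

Definition stepc m (a : 'I_m.+1 -> nat) k (c : seq {set 'I_m.+1}) : seq (seq {set 'I_m.+1}) :=
  let x : 'I_m.+1 := inord k in
  match c with
  | [::] => [::]
  | [:: h] => [:: [:: h; x |: h]]
  | h :: ((y :: t') as t) =>
    if Sk a k <= sm a h + sm a (last y t') then
      [:: h :: [seq x |: B | B <- h :: t] ; t]
    else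
      [:: rcons (h :: t) (x |: last y t') ; [seq x |: B | B <- h :: belast y t'] ]
  end.

Definition step m (a : 'I_m.+1 -> nat) k chs := flatten (map (stepc a k) chs).

Fixpoint chains m (a : 'I_m.+1 -> nat) k := match k with
  | 0 => [:: [:: set0]] | k'.+1 => step a k' (chains a k') end.

Lemma stepc_perm m (a : 'I_m.+1 -> nat) k c :
  perm_eq (flatten (stepc a k c)) (c ++ [seq (inord k : 'I_m.+1) |: B | B <- c]).
Proof.
case: c => [|h [|y t]] //=.
set f := fun B => (inord k : 'I_m.+1) |: B.
case: ifP => _ /=; rewrite !cats0.
  rewrite perm_cons.
  change (perm_eq ((f h :: f y :: map f t) ++ (y :: t)) ((y :: t) ++ (f h :: f y :: map f t))).
  by rewrite perm_catC.
rewrite !perm_cons cat_rcons perm_cat2l.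
have -> : f y :: map f t = map f (y :: t) by [].
rewrite [y :: t]lastI map_rcons perm_sym.
change (perm_eq (f h :: rcons [seq f B | B <- belast y t] (f (last y t)))
   (f (last y t) :: f h :: [seq f B | B <- belast y t])).
rewrite -rcons_cons perm_rcons perm_refl //.
Qed.

Lemma step_perm m (a : 'I_m.+1 -> nat) k chs :
  perm_eq (flatten (step a k chs))
    (flatten chs ++ [seq (inord k : 'I_m.+1) |: B | B <- flatten chs]).
Proof.
elim: chs => [|c chs IH] //=.
rewrite /step /= flatten_cat map_cat.
rewrite /step in IH.
apply: perm_trans (perm_cat (stepc_perm a k c) IH) _.
by rewrite perm_catACA.
Qed.

Definition Inv m (a : 'I_m.+1 -> nat) (M k : nat) (chs : seq (seq {set 'I_m.+1})) :=
  [/\ uniq (flatten chs),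
      (forall B, B \in flatten chs -> forall i : 'I_m.+1, i \in B -> i < k),
      (forall B : {set 'I_m.+1}, (forall i, i \in B -> i < k) -> B \in flatten chs) &
      (forall c, c \in chs -> exists h t, c = h :: t /\ path (@Rc m) h t /\
          sm a h + sm a (last h t) <= Sk a k + M /\ Sk a k <= sm a h + sm a (last h t) + M)].

Lemma Sk_succ m (a : 'I_m.+1 -> nat) k : k < m.+1 -> Sk a k.+1 = Sk a k + a (inord k).
Proof.
move=> km; rewrite /Sk (bigD1 (inord k)) /= ?inordK ?ltnSn // addnC; congr (_ + _).
apply: eq_bigl => i; rewrite ltnS [(i < k)%N]ltn_neqAle andbC -(inj_eq val_inj) /= inordK //.
Qed.

Lemma sm_U1 m (a : 'I_m.+1 -> nat) (x : 'I_m.+1) (B : {set 'I_m.+1}) : x \notin B -> sm a (x |: B) = a x + sm a B.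
Proof. by move=> xB; rewrite /sm big_setU1. Qed.

Lemma Rc_U1 m (x : 'I_m.+1) (A B : {set 'I_m.+1}) : Rc A B -> x \notin A -> x \notin B -> Rc (x |: A) (x |: B).
Proof.
move=> /andP[sAB /eqP cB] xA xB; apply/andP; split; first exact: setUS.
by rewrite !cardsU1 xA xB cB.
Qed.

Lemma Rc_add m (x : 'I_m.+1) (A : {set 'I_m.+1}) : x \notin A -> Rc A (x |: A).
Proof. by move=> xA; rewrite /Rc subsetUr cardsU1 xA eqxx. Qed.

Lemma path_U1 m (x : 'I_m.+1) (A : {set 'I_m.+1}) p : path (@Rc m) A p ->
  (forall B, B \in A :: p -> x \notin B) -> path (@Rc m) (x |: A) [seq x |: B | B <- p].
Proof.
elim: p A => [|y p IH] A //= /andP[R pp] xn.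
rewrite Rc_U1 ?xn ?inE ?eqxx ?orbT //=.
apply: IH => // B; rewrite inE => /orP[/eqP->|Bp]; apply: xn; by rewrite !inE ?eqxx ?Bp ?orbT.
Qed.

Lemma Inv_step m (a : 'I_m.+1 -> nat) M k chs :
  (forall i j : 'I_m.+1, i <= j -> a i <= a j) -> (forall i, a i <= M) -> k < m.+1 ->
  Inv a M k chs -> Inv a M k.+1 (step a k chs).
Proof.
move=> amono aM km [U G2 G3 C].
have P := step_perm a k chs.
set x : 'I_m.+1 := inord k in P.
have xk : nat_of_ord x = k by apply: inordK.
have xn B : B \in flatten chs -> x \notin B.
  by move=> BF; apply/negP => /(G2 _ BF); rewrite xk ltnn.
have ax (j : 'I_m.+1) : j < k -> a j <= a x by move=> jk; apply: amono; rewrite xk ltnW.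
split.
- rewrite (perm_uniq P) cat_uniq U /=; apply/andP; split.
    apply/hasPn => _ /mapP[B BF ->]; apply/negP => /xn; by rewrite setU11.
  rewrite map_inj_in_uniq // => A B AF BF /(congr1 (fun X => X :\ x)).
  by rewrite !setU1K ?xn.
- move=> B; rewrite (perm_mem P) mem_cat => /orP[BF i iB|/mapP[B' B'F ->] i].
    by rewrite ltnS ltnW // (G2 B BF i iB).
  rewrite in_setU1 => /orP[/eqP->|iB']; first by rewrite xk.
  by rewrite ltnS ltnW // (G2 B' B'F i iB').
- move=> B HB; rewrite (perm_mem P) mem_cat.
  case xB: (x \in B).
    apply/orP; right; apply/mapP; exists (B :\ x); last by rewrite setD1K.
    apply: G3 => i; rewrite in_setD1 => /andP[ix iB].
    have := HB i iB; rewrite ltnS leq_eqVlt => /orP[/eqP e|//].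
    by move: ix; rewrite -(inj_eq val_inj) /= xk e eqxx.
  apply/orP; left; apply: G3 => i iB.
  have := HB i iB; rewrite ltnS leq_eqVlt => /orP[/eqP e|//].
  have ix : i = x by apply: val_inj; rewrite /= xk.
  by move: xB; rewrite -ix iB.
move=> c /flattenP[s /mapP[c0 c0in ->] cin].
have [h [t [E [pt [d1 d2]]]]] := C c0 c0in.
have inF B : B \in c0 -> B \in flatten chs by move=> BB; apply/flattenP; exists c0.
subst c0; clear c0in C.
have xhs B : B \in h :: t -> x \notin B by move=> /inF /xn.
have le B : B \in h :: t -> forall j, j \in B -> a j <= a x.
  by move=> /inF BF j jB; apply: ax; apply: (G2 B BF).
have xh : x \notin h by apply: xhs; rewrite inE eqxx.
rewrite Sk_succ // -/x; clear inF.
move: cin; case: t pt d1 d2 xhs le => [|y t] pt d1 d2 xhs le /=; rewrite -/x.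
  rewrite inE => /eqP->; exists h, [:: x |: h]; split => //; split.
    by rewrite /= Rc_add.
  rewrite /= sm_U1 //; simpl in d1, d2; lia.
simpl in d1, d2.
set l := last y t in d1 d2 *.
have lin : l \in h :: y :: t by rewrite inE mem_last orbT.
have xl : x \notin l by apply: xhs.
have pt' := pt; move: pt' => /= /andP[Rhy pyt].
have aMx := aM x.
case: ifP => hd; rewrite !inE => /orP[/eqP->|/eqP->].
- exists h, (x |: h :: [seq x |: B | B <- y :: t]); split => //; split.
    by apply/andP; split; [exact: Rc_add | exact: path_U1 pt xhs].
  rewrite [last _ _]/= last_map sm_U1 // -/l; lia.
- exists y, t; split => //; split => //.
  have [j jy ey] := Rc_sum a Rhy.
  have yin : y \in h :: y :: t by rewrite !inE eqxx orbT.
  have := le y yin j jy.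
  rewrite -/l; lia.
- exists h, (rcons (y :: t) (x |: l)); split => //; split.
    by rewrite rcons_path pt /= Rc_add.
  move/negbT: hd; rewrite -ltnNge => hd.
  rewrite last_rcons sm_U1 //; lia.
- move/negbT: hd; rewrite -ltnNge => hd.
  have pt2 := pt; rewrite lastI rcons_path -/l in pt2; move/andP: pt2 => [pb Rl].
  have xhs' B : B \in h :: belast y t -> x \notin B.
    rewrite inE => /orP[/eqP->|Bb]; apply: xhs; first by rewrite inE eqxx.
    by rewrite inE (mem_belast Bb) orbT.
  set l' := last h (belast y t) in Rl.
  have xl' : x \notin l' by apply: xhs'; exact: mem_last.
  exists (x |: h), [seq x |: B | B <- belast y t]; split => //; split.
    exact: path_U1 pb xhs'.
  rewrite last_map -/l' !sm_U1 //.
  have [j jl el] := Rc_sum a Rl.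
  have := le l lin j jl.
  lia.
Qed.

Lemma win_card m (a : 'I_m.+1 -> nat) M S g :
  (forall t, #|[set B : {set 'I_m.+1} | sm a B == t]| <= g) ->
  #|[set B : {set 'I_m.+1} | win a M S B]| <= M.+1 * g.
Proof.
move=> H.
set lo := (S - M).+1 %/ 2.
have rng B : win a M S B -> lo <= sm a B < lo + M.+1.
  by rewrite /win /lo => /andP[h1 h2]; apply/andP; split; lia.
rewrite -sum1_card.
apply: (@leq_trans (\sum_(B in [set B : {set 'I_m.+1} | win a M S B])
                      \sum_(t < M.+1) (sm a B == lo + t))).
  apply: leq_sum => B; rewrite inE => /rng /andP[r1 r2].
  have tl : sm a B - lo < M.+1 by lia.
  rewrite (bigD1 (Ordinal tl)) //= subnKC // eqxx.
  exact: leq_addr.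
rewrite exchange_big /=.
apply: (@leq_trans (\sum_(t < M.+1) g)); last by rewrite sum_nat_const card_ord.
apply: leq_sum => t _; apply: leq_trans (H (lo + t)).
apply: (@leq_trans (\sum_B (sm a B == lo + t))).
  rewrite [X in X <= _]big_mkcond; apply: leq_sum => B _; by case: (B \in _).
rewrite -sum1_card [X in _ <= X]big_mkcond /=; apply: eq_leq; apply: eq_bigr => B _.
by rewrite inE; case: (_ == _).
Qed.

Lemma flatten_same (T : eqType) (s : seq (seq T)) c c' x :
  uniq (flatten s) -> c \in s -> c' \in s -> x \in c -> x \in c' -> c = c'.
Proof.
elim: s => [|d s IH] //=; rewrite cat_uniq => /and3P[ud hd us].
rewrite !inE => /orP[/eqP->|cs] /orP[/eqP->|c's] xc xc' //.
- have xf : x \in flatten s by apply/flattenP; exists c'.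
  by have := (hasPn hd) x xf; rewrite /= xc.
- have xf : x \in flatten s by apply/flattenP; exists c.
  by have := (hasPn hd) x xf; rewrite /= xc'.
- exact: IH us cs c's xc xc'.
Qed.

Lemma Inv_chains m (a : 'I_m.+1 -> nat) M :
  (forall i j : 'I_m.+1, i <= j -> a i <= a j) -> (forall i, a i <= M) ->
  forall k, k <= m.+1 -> Inv a M k (chains a k).
Proof.
move=> amono aM; elim=> [|k IH] km /=.
  split => //.
  - by move=> B; rewrite inE => /eqP-> i; rewrite inE.
  - move=> B HB; rewrite /= inE; apply/eqP/setP => i; rewrite inE.
    by apply/negbTE/negP => /HB.
  - move=> c; rewrite inE => /eqP->; exists set0, [::]; split => //; split => //.
    by rewrite /= /sm /Sk big_set0 big_pred0.
by apply: Inv_step => //; apply: IH; apply: ltnW.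
Qed.

Lemma arith1 x y S M : x + y <= S + M -> x <= y -> 2 * x <= S + M.
Proof. lia. Qed.
Lemma arith2 x y S M : S <= x + y + M -> x <= y -> S <= 2 * y + M.
Proof. lia. Qed.

Unset Implicit Arguments.

Theorem theorem4 (g m : nat) (a : 'I_m.+1 -> nat) :
  (1 <= g)%N ->
  (forall i, (0 < a i)%N) ->
  (forall i j : 'I_m.+1, (i < j)%N -> (a i < a j)%N) ->
  D_set g a ->
  ((a ord_max)%:R >= (g%:R)^-1 * ('C(m.+1, m.+1./2))%:R - 1 :> rat)%R
  /\ ('C(m.+1, m.+1./2) <= g * (a ord_max + 1))%N.
Proof.
move=> g1 apos amono_s hD.
set M := a ord_max.
have amono (i j : 'I_m.+1) : (i <= j)%N -> (a i <= a j)%N.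
  rewrite leq_eqVlt => /orP[/eqP e|lt]; last by apply: ltnW; apply: amono_s.
  by have -> : i = j by apply: val_inj.
have aM i : (a i <= M)%N by apply: amono; exact: leq_ord.
have [U G2 G3 C] := Inv_chains amono aM (leqnn m.+1).
set chs := chains a m.+1 in U G2 G3 C.
set S := Sk a m.+1 in C.
pose chainOf := fun A : {set 'I_m.+1} => nth [::] chs (find (fun c => A \in c) chs).
pose hitOf := fun c : seq {set 'I_m.+1} => nth set0 c (find (win a M S) c).
have inchs A : A \in chainOf A /\ chainOf A \in chs.
  have hasA : has (fun c => A \in c) chs.
    have := G3 A (fun (i : 'I_m.+1) (_ : i \in A) => ltn_ord i) => /flattenP[c cin Ac]; apply/hasP; exists c => //.
  rewrite /chainOf; split; [exact: (nth_find _ hasA) | by rewrite mem_nth // -has_find].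
have hitP c : c \in chs -> hitOf c \in c /\ win a M S (hitOf c).
  move=> cin; have [h [t [E [pt [d1 d2]]]]] := C c cin.
  have hw : has (win a M S) c.
    have H := Rc_mono a pt; rewrite E; apply: (hit aM pt); [exact: arith1 d1 H | exact: arith2 d2 H].
  rewrite /hitOf; split; [by rewrite mem_nth // -has_find | exact: (nth_find _ hw)].
have key : ('C(m.+1, m.+1./2) <= g * (M + 1))%N.
  rewrite -{1}[m.+1]card_ord -card_draws.
  apply: (@leq_trans #|[set B : {set 'I_m.+1} | win a M S B]|); last first.
    rewrite addn1 mulnC; apply: win_card => t.
    have km : (1 <= m.+1 <= m.+1)%N by rewrite leqnn.
    apply: leq_trans (hD m.+1 km t); apply: eq_leq; apply: eq_card => B; rewrite !inE.
    have -> : [forall i in B, (i < m.+1)%N] by apply/forall_inP => i _; exact: ltn_ord.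
    by [].
  apply: (@leq_trans #|[set hitOf (chainOf A) | A in [set A : {set 'I_m.+1} | #|A| == m.+1./2]]|); last first.
    apply: subset_leq_card; apply/subsetP => _ /imsetP[A _ ->]; rewrite inE.
    exact: (hitP _ (inchs A).2).2.
  rewrite card_in_imset //.
  move=> A A'; rewrite !inE => /eqP cA /eqP cA' e.
  have [Ain Ach] := inchs A; have [Ain' Ach'] := inchs A'.
  have [h1 _] := hitP _ Ach; have [h2 _] := hitP _ Ach'.
  have ec : chainOf A = chainOf A'.
    by apply: (flatten_same U Ach Ach' h1); rewrite e.
  have [h [t [E [pt _]]]] := C _ Ach.
  apply: (Rc_uniqcard pt); first by rewrite -E.
    by rewrite -E ec.
  by rewrite cA cA'.
split => //.
rewrite lerBlDr ler_pdivrMl ?ltr0n // natr1 -natrM ler_nat.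
by move: key; rewrite addn1.
Qed.
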